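(* If $G\subset\mathbb{R}^2$ is (the open domain bounded by) a rhombus with smallest angle $\alpha$, then \[ A_G\ge\frac{2}{\sin\frac{\alpha}{2}}. \]
   Context: For a domain $G\subsetneq\mathbb{R}^n$ let $d_G(x)=d(x,\partial G)$; $k_G(x,y)=\inf_\gamma\int_\gamma\frac{|dx|}{d_G(x)}$ over rectifiable curves $\gamma\subset G$ joining $x,y$ (quasihyperbolic distance); $j_G(x,y)=\log\left(1+\frac{|x-y|}{\min\{d_G(x),d_G(y)\}}\right)$; and the uniformity constant is $A_G=\inf\{A\ge1: k_G\le A\,j_G\text{ on }G\times G\}$ (with $\inf\emptyset=+\infty$). *)

(* Defs.v *)
From Stdlib Require Import Reals Lra ClassicalEpsilon.
Open Scope R_scope.

Definition pt := (R * R)%type.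

Definition dist (p q : pt) : R :=
  sqrt ((fst p - fst q) ^ 2 + (snd p - snd q) ^ 2).

(* greatest lower bound of a set of reals; an arbitrary value if none exists *)
Definition is_glb (E : R -> Prop) (m : R) : Prop :=
  (forall x, E x -> m <= x) /\ (forall b, (forall x, E x -> b <= x) -> b <= m).

Definition Rinf (E : R -> Prop) : R :=
  epsilon (inhabits 0) (fun m => is_glb E m).

Definition boundary (G : pt -> Prop) (z : pt) : Prop :=
  (forall eps, 0 < eps -> exists w, G w /\ dist w z < eps) /\
  (forall eps, 0 < eps -> exists w, ~ G w /\ dist w z < eps).

Definition dG (G : pt -> Prop) (x : pt) : R :=
  Rinf (fun r => exists z, boundary G z /\ r = dist x z).

Fixpoint rsum (f : nat -> R) (n : nat) : R :=
  match n with O => 0 | S m => rsum f m + f m end.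

Definition partition (a b : R) (p : nat -> R) (n : nat) : Prop :=
  p O = a /\ p n = b /\ (forall i, (i < n)%nat -> p i <= p (S i)).

Definition poly_length (g : R -> pt) (p : nat -> R) (n : nat) : R :=
  rsum (fun i => dist (g (p (S i))) (g (p i))) n.

(* L is the length of the curve g restricted to [a,b] (sup of inscribed
   polygonal lengths); existence of such L = rectifiability *)
Definition is_length (g : R -> pt) (a b L : R) : Prop :=
  a <= b /\
  is_lub (fun l => exists p n, partition a b p n /\ l = poly_length g p n) L.

Definition continuous_on (g : R -> pt) (a b : R) : Prop :=
  forall t, a <= t <= b -> forall eps, 0 < eps ->
    exists delta, 0 < delta /\
      forall u, a <= u <= b -> Rabs (u - t) < delta -> dist (g u) (g t) < eps.

(* line integral with respect to arc length:  I = \int_gamma f |dx|,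
   defined through the arc-length parametrization g0 of gamma
   (g0 (s_gamma(t)) = gamma t, s_gamma(t) = length of gamma on [a,t])
   as  \int_0^L f (g0 s) ds. *)
Definition line_integral (f : pt -> R) (g : R -> pt) (a b I : R) : Prop :=
  exists L, is_length g a b L /\
  exists g0 : R -> pt,
    (forall t s, a <= t <= b -> is_length g a t s -> g0 s = g t) /\
    exists pr : Riemann_integrable (fun s => f (g0 s)) 0 L, RiemannInt pr = I.

Definition qh_length_of_curve (G : pt -> Prop) (x y : pt) (I : R) : Prop :=
  exists (g : R -> pt) (a b : R),
    a <= b /\ continuous_on g a b /\
    (forall t, a <= t <= b -> G (g t)) /\ g a = x /\ g b = y /\
    line_integral (fun z => 1 / dG G z) g a b I.

Definition kG (G : pt -> Prop) (x y : pt) : R :=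
  Rinf (qh_length_of_curve G x y).

Definition jG (G : pt -> Prop) (x y : pt) : R :=
  ln (1 + dist x y / Rmin (dG G x) (dG G y)).

(* A belongs to the set whose infimum is the uniformity constant A_G *)
Definition uniformity_bound (G : pt -> Prop) (A : R) : Prop :=
  1 <= A /\ forall x y, G x -> G y -> kG G x y <= A * jG G x y.

(* Open rhombus with vertices P, P+u, P+u+v, P+v  (|u| = |v| > 0,
   u, v linearly independent). *)
Definition rhombus (P u v : pt) (z : pt) : Prop :=
  exists s t, 0 < s < 1 /\ 0 < t < 1 /\
    z = (fst P + s * fst u + t * fst v, snd P + s * snd u + t * snd v).

Definition norm2 (u : pt) : R := sqrt (fst u ^ 2 + snd u ^ 2).
Definition dot (u v : pt) : R := fst u * fst v + snd u * snd v.
Definition det (u v : pt) : R := fst u * snd v - snd u * fst v.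

(* Main.v *)
From Pilot Require Import Defs.
From Stdlib Require Import Reals.
From Stdlib Require Import Lra Lia ClassicalEpsilon FunctionalExtensionality PropExtensionality Classical.
From Coquelicot Require Import Coquelicot.
Import Pilot.Defs.
Open Scope R_scope.

Lemma sqrt_triang a1 b1 a2 b2 :
  sqrt ((a1+a2)^2+(b1+b2)^2) <= sqrt (a1^2+b1^2) + sqrt (a2^2+b2^2).
Proof.
  set (X := sqrt (a1^2+b1^2)). set (Y := sqrt (a2^2+b2^2)).
  assert (HX : 0 <= X) by apply sqrt_pos.
  assert (HY : 0 <= Y) by apply sqrt_pos.
  assert (HX2 : X*X = a1^2+b1^2) by (apply sqrt_sqrt; nra).
  assert (HY2 : Y*Y = a2^2+b2^2) by (apply sqrt_sqrt; nra).
  assert (HXY : a1*a2+b1*b2 <= X*Y).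
  { destruct (Rle_dec (a1*a2+b1*b2) 0). nra.
    apply Rsqr_incr_0_var. unfold Rsqr.
    replace (X*Y*(X*Y)) with ((X*X)*(Y*Y)) by ring. rewrite HX2, HY2. pose proof (pow2_ge_0 (a1*b2-a2*b1)); nra. nra. }
  rewrite <- (sqrt_Rsqr (X+Y)) by lra. apply sqrt_le_1_alt. unfold Rsqr. nra.
Qed.

Lemma dist_pos p q : 0 <= dist p q.
Proof. apply sqrt_pos. Qed.

Lemma dist_sym p q : dist p q = dist q p.
Proof. unfold dist. f_equal. ring. Qed.

Lemma dist_refl p : dist p p = 0.
Proof. unfold dist. replace ((fst p - fst p) ^ 2 + (snd p - snd p) ^ 2) with 0 by ring. apply sqrt_0. Qed.

Lemma dist_triang p q r : dist p r <= dist p q + dist q r.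
Proof.
  unfold dist.
  replace ((fst p - fst r) ^ 2 + (snd p - snd r) ^ 2) with
    (((fst p - fst q) + (fst q - fst r)) ^ 2 + ((snd p - snd q) + (snd q - snd r)) ^ 2) by ring.
  apply sqrt_triang.
Qed.

Lemma sqrt_scal k X : 0 <= X -> sqrt (k^2 * X) = Rabs k * sqrt X.
Proof. intros. rewrite sqrt_mult by nra. f_equal. rewrite <- sqrt_Rsqr_abs. unfold Rsqr. f_equal; ring. Qed.

Lemma glb_exists (E : R -> Prop) : (exists x, E x) -> (exists m, forall x, E x -> m <= x) ->
  is_glb E (Rinf E).
Proof.
  intros [x0 Hx0] [m Hm].
  assert (Hex : exists g, is_glb E g).
  { destruct (completeness (fun y => E (- y))) as [M HM].
    - exists (- m). intros y Hy. apply Hm in Hy. lra.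
    - exists (- x0). rewrite Ropp_involutive. auto.
    - exists (- M). destruct HM as [H1 H2]. split.
      + intros x Hx. assert (- x <= M). apply H1. rewrite Ropp_involutive; auto. lra.
      + intros b Hb. assert (M <= - b). apply H2. intros y Hy. apply Hb in Hy. lra. lra. }
  unfold Rinf. apply (epsilon_spec (inhabits 0) (fun m => is_glb E m) Hex).
Qed.

Lemma rsum_le f g n : (forall i, (i < n)%nat -> f i <= g i) -> rsum f n <= rsum g n.
Proof.
  induction n; simpl; intros H. lra.
  assert (rsum f n <= rsum g n) by (apply IHn; intros; apply H; lia).
  assert (f n <= g n) by (apply H; lia). lra.
Qed.

Lemma rsum_plus f g n : rsum (fun i => f i + g i) n = rsum f n + rsum g n.
Proof. induction n; simpl. ring. rewrite IHn. ring. Qed.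

Lemma rsum_const c n : rsum (fun _ => c) n = INR n * c.
Proof. induction n. simpl; ring. change (rsum (fun _ => c) (S n)) with (rsum (fun _ => c) n + c). rewrite IHn, S_INR. ring. Qed.

Lemma rsum_ext f g n : (forall i, (i < n)%nat -> f i = g i) -> rsum f n = rsum g n.
Proof.
  induction n; simpl; intros H. auto.
  rewrite IHn by (intros; apply H; lia). rewrite H by lia. auto.
Qed.

Lemma rsum_split f n m : rsum f (n + m) = rsum f n + rsum (fun i => f (n + i)%nat) m.
Proof.
  induction m; simpl. rewrite Nat.add_0_r. ring.
  rewrite Nat.add_succ_r. simpl. rewrite IHm. ring.
Qed.

Definition polys (g : R -> pt) (c d : R) : R -> Prop :=
  fun l => exists p n, partition c d p n /\ l = poly_length g p n.

Definition len g c d := epsilon (inhabits 0) (is_lub (polys g c d)).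

Lemma part_mono c d p n : partition c d p n -> forall i j, (i <= j <= n)%nat -> p i <= p j.
Proof.
  intros [_ [_ H]] i j. induction j; intros Hij.
  - assert (i = 0)%nat by lia. subst. lra.
  - destruct (Nat.eq_dec i (S j)). subst; lra.
    assert (p i <= p j) by (apply IHj; lia). assert (p j <= p (S j)) by (apply H; lia). lra.
Qed.

Lemma part_range c d p n : partition c d p n -> forall i, (i <= n)%nat -> c <= p i <= d.
Proof.
  intros Hp i Hi. pose proof (part_mono _ _ _ _ Hp). destruct Hp as [H0 [Hn _]].
  split. rewrite <- H0. apply H; lia. rewrite <- Hn. apply H; lia.
Qed.

Definition concat (p q : nat -> R) (n : nat) : nat -> R :=
  fun i => if (i <=? n)%nat then p i else q (i - n)%nat.

Lemma concat_part c d e p n q m : partition c d p n -> partition d e q m ->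
  partition c e (concat p q n) (n + m).
Proof.
  intros [Hp0 [Hpn Hp]] [Hq0 [Hqm Hq]]. unfold concat. split; [|split].
  - simpl. auto.
  - destruct (Nat.leb_spec (n+m) n).
    + assert (m = 0)%nat by lia. subst. rewrite Nat.add_0_r. congruence.
    + replace (n + m - n)%nat with m by lia. auto.
  - intros i Hi. destruct (Nat.leb_spec i n); destruct (Nat.leb_spec (S i) n).
    + apply Hp; lia.
    + assert (i = n) by lia. subst i. replace (S n - n)%nat with 1%nat by lia.
      rewrite Hpn, <- Hq0. destruct m. lia. apply Hq; lia.
    + lia.
    + replace (S i - n)%nat with (S (i - n)) by lia. apply Hq; lia.
Qed.

Lemma concat_len g p n q m : p n = q O ->
  poly_length g (concat p q n) (n + m) = poly_length g p n + poly_length g q m.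
Proof.
  intros Hpq. unfold poly_length. rewrite rsum_split. f_equal.
  - apply rsum_ext. intros i Hi. unfold concat.
    destruct (Nat.leb_spec i n); destruct (Nat.leb_spec (S i) n); try lia. auto.
  - apply rsum_ext. intros j Hj. unfold concat.
    destruct (Nat.leb_spec (S (n+j)) n); try lia.
    replace (S (n + j) - n)%nat with (S j) by lia.
    destruct (Nat.leb_spec (n+j) n).
    + assert (j = 0)%nat by lia. subst. rewrite Nat.add_0_r. rewrite Hpq. auto.
    + replace (n + j - n)%nat with j by lia. auto.
Qed.

Definition two (c d : R) : nat -> R := fun i => if (i =? 0)%nat then c else d.

Lemma two_part c d : c <= d -> partition c d (two c d) 1.
Proof. intros H. unfold two. split; [|split]; simpl; auto. intros i Hi. assert (i = 0)%nat by lia. subst. simpl. auto. Qed.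

Lemma two_len g c d : poly_length g (two c d) 1 = dist (g d) (g c).
Proof. unfold poly_length, two. simpl. ring. Qed.

Lemma clamp_min_part c e d p n : c <= d <= e -> partition c e p n ->
  partition c d (fun i => Rmin (p i) d) n.
Proof.
  intros Hd [H0 [Hn H]]. split; [|split].
  - rewrite H0. apply Rmin_left. lra.
  - rewrite Hn. apply Rmin_right. lra.
  - intros i Hi. specialize (H i Hi). unfold Rmin. destruct (Rle_dec (p i) d); destruct (Rle_dec (p (S i)) d); lra.
Qed.

Lemma clamp_max_part c e d p n : c <= d <= e -> partition c e p n ->
  partition d e (fun i => Rmax (p i) d) n.
Proof.
  intros Hd [H0 [Hn H]]. split; [|split].
  - rewrite H0. apply Rmax_right. lra.
  - rewrite Hn. apply Rmax_left. lra.
  - intros i Hi. specialize (H i Hi). unfold Rmax. destruct (Rle_dec (p i) d); destruct (Rle_dec (p (S i)) d); lra.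
Qed.

Lemma clamp_split g c e d p n : c <= d <= e -> partition c e p n ->
  poly_length g p n <= poly_length g (fun i => Rmin (p i) d) n + poly_length g (fun i => Rmax (p i) d) n.
Proof.
  intros Hd [H0 [Hn H]]. unfold poly_length. rewrite <- rsum_plus. apply rsum_le.
  intros i Hi. specialize (H i Hi). unfold Rmin, Rmax.
  destruct (Rle_dec (p i) d); destruct (Rle_dec (p (S i)) d).
  - rewrite dist_refl. lra.
  - assert (p i = d \/ p i < d) as [E|E] by lra.
    + rewrite E, dist_refl. lra.
    + rewrite Rplus_comm. apply dist_triang.
  - lra.
  - rewrite dist_refl. lra.
Qed.

Lemma perturb g p q n eta :
  (forall i, (i <= n)%nat -> dist (g (p i)) (g (q i)) <= eta) ->
  poly_length g p n <= poly_length g q n + INR n * (2 * eta).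
Proof.
  intros H. unfold poly_length. rewrite <- rsum_const, <- rsum_plus. apply rsum_le.
  intros i Hi.
  pose proof (dist_triang (g (p (S i))) (g (q (S i))) (g (p i))).
  pose proof (dist_triang (g (q (S i))) (g (q i)) (g (p i))).
  pose proof (H (S i) ltac:(lia)). pose proof (H i ltac:(lia)).
  rewrite (dist_sym (g (q i)) (g (p i))) in H1. lra.
Qed.

Lemma poly_nonneg g p n : 0 <= poly_length g p n.
Proof. unfold poly_length. induction n; simpl. lra. pose proof (dist_pos (g (p (S n))) (g (p n))). lra. Qed.

Lemma lub_approx E m eps : is_lub E m -> 0 < eps -> exists x, E x /\ m - eps < x.
Proof.
  intros [H1 H2] He. apply NNPP. intros Hn.
  assert (m <= m - eps). { apply H2. intros x Hx. apply Rnot_lt_le. intros Hl. apply Hn. exists x. auto. }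
  lra.
Qed.

Lemma polys_le_L g a b L c d l : is_length g a b L -> a <= c -> c <= d -> d <= b ->
  polys g c d l -> l <= L.
Proof.
  intros [Hab [HU _]] Hac Hcd Hdb [p [n [Hp ->]]].
  assert (Hq : partition c b (concat p (two d b) n) (n + 1)) by (apply concat_part with d; auto; apply two_part; auto).
  assert (Hr : partition a b (concat (two a c) (concat p (two d b) n) 1) (1 + (n+1))) by (apply concat_part with c; auto; apply two_part; auto).
  assert (Hl := HU _ (ex_intro _ _ (ex_intro _ _ (conj Hr eq_refl)))).
  rewrite concat_len in Hl.
  2:{ unfold two, concat. simpl. destruct Hp as [Hp0 _]. auto. }
  rewrite concat_len in Hl.
  2:{ unfold two. simpl. destruct Hp as [_ [Hpn _]]. auto. }
  rewrite !two_len in Hl. pose proof (dist_pos (g c) (g a)). pose proof (dist_pos (g b) (g d)). lra.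
Qed.

Lemma len_spec g a b L c d : is_length g a b L -> a <= c -> c <= d -> d <= b ->
  is_lub (polys g c d) (len g c d).
Proof.
  intros HL Hac Hcd Hdb.
  assert (Hex : exists m, is_lub (polys g c d) m).
  { destruct (completeness (polys g c d)) as [m Hm].
    - exists L. intros l Hl. eapply polys_le_L; eauto.
    - exists (poly_length g (two c d) 1). exists (two c d), 1%nat. split; auto. apply two_part; auto.
    - exists m; auto. }
  unfold len. apply (epsilon_spec (inhabits 0) _ Hex).
Qed.

Lemma len_ge_chord g a b L c d : is_length g a b L -> a <= c -> c <= d -> d <= b ->
  dist (g d) (g c) <= len g c d.
Proof.
  intros HL Hac Hcd Hdb. destruct (len_spec g a b L c d HL Hac Hcd Hdb) as [H _].
  rewrite <- two_len. apply H. exists (two c d), 1%nat. split; auto. apply two_part; auto.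
Qed.

Lemma len_aa g a b L : is_length g a b L -> len g a a = 0.
Proof.
  intros HL. assert (Hab : a <= b) by (destruct HL; auto).
  destruct (len_spec g a b L a a HL (Rle_refl a) (Rle_refl a) Hab) as [H1 H2].
  apply Rle_antisym.
  - apply H2. intros l [p [n [Hp ->]]]. unfold poly_length. apply Req_le.
    assert (forall i, (i <= n)%nat -> p i = a). { intros i Hi. pose proof (part_range _ _ _ _ Hp i Hi). lra. }
    transitivity (rsum (fun _ => 0) n).
    apply rsum_ext. intros i Hi. rewrite (H (S i)), (H i) by lia. apply dist_refl.
    rewrite rsum_const. ring.
  - rewrite <- (dist_refl (g a)). rewrite <- two_len. apply H1. exists (two a a), 1%nat. split; auto. apply two_part; lra.
Qed.

Lemma len_ab g a b L : is_length g a b L -> len g a b = L.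
Proof.
  intros HL. assert (Hab : a <= b) by (destruct HL; auto).
  apply (is_lub_u (polys g a b)). apply (len_spec g a b L); auto; lra. destruct HL; auto.
Qed.

Lemma len_concat g a b L t : is_length g a b L -> a <= t <= b -> len g a t + len g t b <= L.
Proof.
  intros HL Ht.
  destruct (len_spec g a b L a t HL (Rle_refl a) (proj1 Ht) (proj2 Ht)) as [A1 A2].
  destruct (len_spec g a b L t b HL (proj1 Ht) (proj2 Ht) (Rle_refl b)) as [B1 B2].
  destruct HL as [Hab [HU _]].
  assert (Hpq : forall p n q m, partition a t p n -> partition t b q m ->
     poly_length g p n + poly_length g q m <= L).
  { intros p n q m Hp Hq. rewrite <- concat_len. apply HU. exists (concat p q n), (n+m)%nat. split; auto.
    apply concat_part with t; auto. destruct Hp as [_ [? _]]; destruct Hq as [? _]; congruence. }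
  assert (len g t b <= L - len g a t); [|lra].
  apply B2. intros l [q [m [Hq ->]]].
  assert (len g a t <= L - poly_length g q m); [|lra].
  apply A2. intros l [p [n [Hp ->]]]. specialize (Hpq p n q m Hp Hq). lra.
Qed.

Lemma len_split g a b L t : is_length g a b L -> a <= t <= b -> L <= len g a t + len g t b.
Proof.
  intros HL Ht.
  destruct (len_spec g a b L a t HL (Rle_refl a) (proj1 Ht) (proj2 Ht)) as [A1 A2].
  destruct (len_spec g a b L t b HL (proj1 Ht) (proj2 Ht) (Rle_refl b)) as [B1 B2].
  destruct HL as [Hab [HU HL]]. apply HL. intros l [p [n [Hp ->]]].
  eapply Rle_trans. apply (clamp_split g a b t p n Ht Hp).
  apply Rplus_le_compat.
  - apply A1. exists (fun i => Rmin (p i) t), n. split; auto. apply clamp_min_part with b; auto.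
  - apply B1. exists (fun i => Rmax (p i) t), n. split; auto. apply clamp_max_part with a; auto.
Qed.

Lemma len_mono g a b L t1 t2 : is_length g a b L -> a <= t1 -> t1 <= t2 -> t2 <= b ->
  len g a t1 <= len g a t2.
Proof.
  intros HL H1 H2 H3.
  destruct (len_spec g a b L a t1 HL (Rle_refl a) H1 ltac:(lra)) as [A1 A2].
  destruct (len_spec g a b L a t2 HL (Rle_refl a) ltac:(lra) H3) as [B1 B2].
  apply A2. intros l [p [n [Hp ->]]].
  assert (poly_length g (concat p (two t1 t2) n) (n + 1) <= len g a t2).
  { apply B1. eexists _, _. split; eauto. apply concat_part with t1; auto. apply two_part; auto. }
  rewrite concat_len in H. rewrite two_len in H. pose proof (dist_pos (g t2) (g t1)). lra.
  unfold two. simpl. destruct Hp as [_ [? _]]; auto.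
Qed.

Lemma eps_small n eps : 0 < eps -> INR n * (2 * (2 * (eps / (8 * (INR n + 1))))) <= eps / 2.
Proof.
  intros He. pose proof (pos_INR n).
  replace (INR n * (2 * (2 * (eps / (8 * (INR n + 1)))))) with ((eps / 2) * (INR n / (INR n + 1))) by (field; lra).
  assert (INR n / (INR n + 1) <= 1). { apply Rmult_le_reg_r with (INR n + 1). lra. field_simplify; lra. }
  assert (0 <= INR n / (INR n + 1)) by (apply Rdiv_le_0_compat; lra). nra.
Qed.

Lemma right_approx g a b L t0 eps : is_length g a b L -> Defs.continuous_on g a b ->
  a <= t0 <= b -> 0 < eps ->
  exists delta, 0 < delta /\ forall t, t0 <= t <= b -> t - t0 < delta -> len g t0 b - eps <= len g t b.
Proof.
  intros HL Hc Ht0 He.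
  destruct (lub_approx _ _ (eps/2) (len_spec g a b L t0 b HL (proj1 Ht0) (proj2 Ht0) (Rle_refl b)) ltac:(lra))
    as [l [[Q [n [HQ ->]]] Hl]].
  set (e' := eps / (8 * (INR n + 1))).
  assert (He' : 0 < e'). { unfold e'. pose proof (pos_INR n). apply Rdiv_lt_0_compat; lra. }
  destruct (Hc t0 Ht0 e' He') as [delta [Hd Hdel]].
  exists delta. split; auto. intros t Ht Htd.
  assert (Hpart : partition t b (fun i => Rmax (Q i) t) n) by (apply clamp_max_part with t0; auto).
  assert (Hin : poly_length g (fun i => Rmax (Q i) t) n <= len g t b).
  { apply (len_spec g a b L t b HL ltac:(lra) (proj2 Ht) (Rle_refl b)). exists (fun i => Rmax (Q i) t), n. auto. }
  assert (Hp : poly_length g Q n <= poly_length g (fun i => Rmax (Q i) t) n + INR n * (2 * (2 * e'))).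
  { apply perturb. intros i Hi. pose proof (part_range _ _ _ _ HQ i Hi).
    unfold Rmax. destruct (Rle_dec (Q i) t).
    - pose proof (dist_triang (g (Q i)) (g t0) (g t)).
      assert (dist (g (Q i)) (g t0) < e') by (apply Hdel; [lra| rewrite Rabs_right; lra]).
      assert (dist (g t) (g t0) < e') by (apply Hdel; [lra| rewrite Rabs_right; lra]).
      rewrite (dist_sym (g t0)) in H0. lra.
    - rewrite dist_refl. lra. }
  pose proof (eps_small n eps He). fold e' in H. lra.
Qed.

Lemma left_approx g a b L t0 eps : is_length g a b L -> Defs.continuous_on g a b ->
  a <= t0 <= b -> 0 < eps ->
  exists delta, 0 < delta /\ forall t, a <= t <= t0 -> t0 - t < delta -> len g a t0 - eps <= len g a t.
Proof.
  intros HL Hc Ht0 He.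
  destruct (lub_approx _ _ (eps/2) (len_spec g a b L a t0 HL (Rle_refl a) (proj1 Ht0) (proj2 Ht0)) ltac:(lra))
    as [l [[Q [n [HQ ->]]] Hl]].
  set (e' := eps / (8 * (INR n + 1))).
  assert (He' : 0 < e'). { unfold e'. pose proof (pos_INR n). apply Rdiv_lt_0_compat; lra. }
  destruct (Hc t0 Ht0 e' He') as [delta [Hd Hdel]].
  exists delta. split; auto. intros t Ht Htd.
  assert (Hpart : partition a t (fun i => Rmin (Q i) t) n) by (apply clamp_min_part with t0; auto).
  assert (Hin : poly_length g (fun i => Rmin (Q i) t) n <= len g a t).
  { apply (len_spec g a b L a t HL (Rle_refl a) (proj1 Ht) ltac:(lra)). exists (fun i => Rmin (Q i) t), n. auto. }
  assert (Hp : poly_length g Q n <= poly_length g (fun i => Rmin (Q i) t) n + INR n * (2 * (2 * e'))).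
  { apply perturb. intros i Hi. pose proof (part_range _ _ _ _ HQ i Hi).
    unfold Rmin. destruct (Rle_dec (Q i) t).
    - rewrite dist_refl. lra.
    - pose proof (dist_triang (g (Q i)) (g t0) (g t)).
      assert (dist (g (Q i)) (g t0) < e') by (apply Hdel; [lra| rewrite Rabs_left1; lra]).
      assert (dist (g t) (g t0) < e') by (apply Hdel; [lra| rewrite Rabs_left1; lra]).
      rewrite (dist_sym (g t0)) in H0. lra. }
  pose proof (eps_small n eps He). fold e' in H. lra.
Qed.

Lemma ell_cont g a b L t0 eps : is_length g a b L -> Defs.continuous_on g a b ->
  a <= t0 <= b -> 0 < eps ->
  exists delta, 0 < delta /\ forall t, a <= t <= b -> Rabs (t - t0) < delta ->
    Rabs (len g a t - len g a t0) <= eps.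
Proof.
  intros HL Hc Ht0 He.
  destruct (right_approx g a b L t0 eps HL Hc Ht0 He) as [d1 [Hd1 H1]].
  destruct (left_approx g a b L t0 eps HL Hc Ht0 He) as [d2 [Hd2 H2]].
  exists (Rmin d1 d2). split. apply Rmin_pos; auto. intros t Ht Htd.
  assert (Htd1 : Rabs (t - t0) < d1) by (pose proof (Rmin_l d1 d2); lra).
  assert (Htd2 : Rabs (t - t0) < d2) by (pose proof (Rmin_r d1 d2); lra).
  destruct (Rle_dec t0 t).
  - rewrite Rabs_right in Htd1 by lra.
    specialize (H1 t ltac:(lra) Htd1).
    pose proof (len_concat g a b L t HL Ht). pose proof (len_split g a b L t0 HL Ht0).
    pose proof (len_mono g a b L t0 t HL ltac:(lra) r ltac:(lra)).
    rewrite Rabs_right; lra.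
  - rewrite Rabs_left1 in Htd2 by lra.
    specialize (H2 t ltac:(lra) ltac:(lra)).
    pose proof (len_mono g a b L t t0 HL ltac:(lra) ltac:(lra) ltac:(lra)).
    rewrite Rabs_left1; lra.
Qed.

Definition clampab (a b t : R) := Rmax a (Rmin t b).

Lemma clampab_in a b t : a <= b -> a <= clampab a b t <= b.
Proof. intros. unfold clampab, Rmax, Rmin. repeat destruct Rle_dec; lra. Qed.

Lemma clampab_lip a b t t' : a <= b -> Rabs (clampab a b t - clampab a b t') <= Rabs (t - t').
Proof. intros. unfold clampab, Rmax, Rmin. repeat destruct Rle_dec; unfold Rabs; repeat destruct Rcase_abs; lra. Qed.

Lemma clampab_id a b t : a <= t <= b -> clampab a b t = t.
Proof. intros. unfold clampab, Rmax, Rmin. repeat destruct Rle_dec; lra. Qed.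

Lemma ell_ivt g a b L s : is_length g a b L -> Defs.continuous_on g a b -> 0 <= s <= L ->
  exists t, a <= t <= b /\ len g a t = s.
Proof.
  intros HL Hc Hs. assert (Hab : a <= b) by (destruct HL; auto).
  set (F := fun t => len g a (clampab a b t)).
  assert (HF : continuity F).
  { intros x0. unfold continuity_pt, continue_in, limit1_in, limit_in. simpl. unfold R_dist.
    intros eps He.
    destruct (ell_cont g a b L (clampab a b x0) (eps/2) HL Hc (clampab_in a b x0 Hab) ltac:(lra)) as [d [Hd H]].
    exists d. split; auto. intros x [_ Hx]. unfold F.
    assert (Rabs (len g a (clampab a b x) - len g a (clampab a b x0)) <= eps/2); [|lra].
    apply H. apply clampab_in; auto. eapply Rle_lt_trans. apply clampab_lip; auto. auto. }
  assert (Fa : F a = 0). { unfold F. rewrite clampab_id by lra. eapply len_aa; eauto. }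
  assert (Fb : F b = L). { unfold F. rewrite clampab_id by lra. eapply len_ab; eauto. }
  destruct (IVT_gen F a b s HF) as [t [Ht Hts]].
  { rewrite Fa, Fb. rewrite Rmin_left by lra. rewrite Rmax_right by lra. auto. }
  rewrite Rmin_left in Ht by lra. rewrite Rmax_right in Ht by lra.
  exists t. split; auto. unfold F in Hts. rewrite clampab_id in Hts; auto.
Qed.

Lemma curve_facts G x y I : qh_length_of_curve G x y I ->
  exists L (g0 : R -> pt) (pr : Riemann_integrable (fun s => 1 / dG G (g0 s)) 0 L),
    RiemannInt pr = I /\ 0 <= L /\ dist x y <= L /\
    forall s, 0 <= s <= L -> G (g0 s) /\ dist (g0 s) x <= s /\ dist (g0 s) y <= L - s.
Proof.
  intros [g [a [b [Hab [Hc [HG [Hx [Hy HI]]]]]]]].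
  destruct HI as [L [HL [g0 [Hg0 [pr Hpr]]]]].
  exists L, g0, pr. split; auto.
  assert (HLe : len g a b = L) by (eapply len_ab; eauto).
  pose proof (len_ge_chord g a b L a b HL (Rle_refl a) Hab (Rle_refl b)).
  pose proof (dist_pos (g b) (g a)).
  split. lra. split. rewrite <- Hx, <- Hy, dist_sym. lra.
  intros s Hs. destruct (ell_ivt g a b L s HL Hc Hs) as [t [Ht Hts]].
  assert (Hlt : is_length g a t s).
  { split. lra. rewrite <- Hts. apply (len_spec g a b L a t HL (Rle_refl a)); lra. }
  rewrite (Hg0 t s Ht Hlt). split. apply HG; auto. split.
  - rewrite <- Hx, <- Hts. apply (len_ge_chord g a b L); auto; lra.
  - rewrite <- Hy, dist_sym. pose proof (len_ge_chord g a b L t b HL ltac:(lra) ltac:(lra) (Rle_refl b)).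
    pose proof (len_concat g a b L t HL Ht). lra.
Qed.

Lemma RInt_h1 S r c : 0 < S -> 0 < r -> 0 <= c ->
  is_RInt (fun s => 1/(S*(r+s))) 0 c (ln (r + c)/S - ln r / S).
Proof.
  intros HS Hr Hc.
  replace (ln (r + c)/S - ln r / S) with (minus ((fun s => ln (r+s)/S) c) ((fun s => ln (r+s)/S) 0)).
  2:{ unfold minus, plus, opp. simpl. rewrite Rplus_0_r. ring. }
  apply (is_RInt_derive (fun s => ln (r+s)/S)).
  - intros s Hs. rewrite Rmin_left in Hs by lra. rewrite Rmax_right in Hs by lra.
    auto_derive. lra. field. lra.
  - intros s Hs. rewrite Rmin_left in Hs by lra. rewrite Rmax_right in Hs by lra.
    apply (ex_derive_continuous (fun s => 1/(S*(r+s)))). auto_derive. nra.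
Qed.

Lemma RInt_h2 S r m L : 0 < S -> 0 < r -> 0 <= m <= L ->
  is_RInt (fun s => 1/(S*(r+L-s))) m L (ln (r + (L - m))/S - ln r / S).
Proof.
  intros HS Hr Hc.
  replace (ln (r + (L - m))/S - ln r / S) with (minus ((fun s => - ln (r+L-s)/S) L) ((fun s => - ln (r+L-s)/S) m)).
  2:{ unfold minus, plus, opp. simpl. replace (r + L - L) with r by ring. replace (r+L-m) with (r + (L-m)) by ring. field. lra. }
  apply (is_RInt_derive (fun s => - ln (r+L-s)/S)).
  - intros s Hs. rewrite Rmin_left in Hs by lra. rewrite Rmax_right in Hs by lra.
    auto_derive. lra. field. split; lra.
  - intros s Hs. rewrite Rmin_left in Hs by lra. rewrite Rmax_right in Hs by lra.
    apply (ex_derive_continuous (fun s => 1/(S*(r+L-s)))). auto_derive. nra.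
Qed.

Lemma int_lower G x y P1 P2 S r L (g0 : R -> pt)
  (pr : Riemann_integrable (fun s => 1 / dG G (g0 s)) 0 L) :
  0 < S -> 0 < r -> 0 <= L ->
  (forall s, 0 <= s <= L -> G (g0 s) /\ dist (g0 s) x <= s /\ dist (g0 s) y <= L - s) ->
  (forall z, G z -> 0 < dG G z /\ dG G z <= S * dist z P1 /\ dG G z <= S * dist z P2) ->
  dist x P1 = r -> dist y P2 = r ->
  (2 / S) * ln ((r + L/2)/r) <= RiemannInt pr.
Proof.
  intros HS Hr HL Hg Hd Hx Hy.
  set (f := fun s => 1 / dG G (g0 s)).
  rewrite <- RInt_Reals. fold f.
  assert (Hex : ex_RInt f 0 L) by (apply ex_RInt_Reals_1; auto).
  assert (E1 : ex_RInt f 0 (L/2)) by (apply (ex_RInt_Chasles_1 (V:=R_CompleteNormedModule) f 0 (L/2) L); auto; lra).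
  assert (E2 : ex_RInt f (L/2) L) by (apply (ex_RInt_Chasles_2 (V:=R_CompleteNormedModule) f 0 (L/2) L); auto; lra).
  rewrite <- (RInt_Chasles (V:=R_CompleteNormedModule) f 0 (L/2) L E1 E2).
  pose proof (RInt_h1 S r (L/2) HS Hr ltac:(lra)) as I1.
  pose proof (RInt_h2 S r (L/2) L HS Hr ltac:(lra)) as I2.
  assert (R1 : RInt (fun s => 1/(S*(r+s))) 0 (L/2) <= RInt f 0 (L/2)).
  { apply RInt_le. lra. eexists; eauto. auto.
    intros s Hs. destruct (Hg s ltac:(lra)) as [HG [H1 H2]]. destruct (Hd _ HG) as [D0 [D1 D2]].
    unfold f. unfold Rdiv. rewrite !Rmult_1_l. apply Rinv_le_contravar. auto.
    pose proof (dist_triang (g0 s) x P1). nra. }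
  assert (R2 : RInt (fun s => 1/(S*(r+L-s))) (L/2) L <= RInt f (L/2) L).
  { apply RInt_le. lra. eexists; eauto. auto.
    intros s Hs. destruct (Hg s ltac:(lra)) as [HG [H1 H2]]. destruct (Hd _ HG) as [D0 [D1 D2]].
    unfold f. unfold Rdiv. rewrite !Rmult_1_l. apply Rinv_le_contravar. auto.
    pose proof (dist_triang (g0 s) y P2). nra. }
  rewrite (is_RInt_unique _ _ _ _ I1) in R1. rewrite (is_RInt_unique _ _ _ _ I2) in R2.
  replace (L - L/2) with (L/2) in R2 by field.
  rewrite ln_div by (try apply Rdiv_lt_0_compat; lra).
  unfold plus. simpl. replace (2 / S * (ln (r + L / 2) - ln r)) with ((ln (r + L / 2) / S - ln r / S) + (ln (r + L / 2) / S - ln r / S)) by (field; lra).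
  lra.
Qed.

Lemma dG_glb G x : (exists b, boundary G b) ->
  is_glb (fun r => exists z, boundary G z /\ r = dist x z) (dG G x).
Proof.
  intros [b Hb]. apply glb_exists. exists (dist x b), b; auto.
  exists 0. intros r [z [_ ->]]. apply dist_pos.
Qed.

Lemma dG_le G x b : boundary G b -> dG G x <= dist x b.
Proof. intros Hb. destruct (dG_glb G x (ex_intro _ b Hb)) as [H _]. apply H. exists b; auto. Qed.

Lemma dG_ge G x rho : (exists b, boundary G b) -> (forall w, dist w x < rho -> G w) -> rho <= dG G x.
Proof.
  intros Hb Hball. destruct (dG_glb G x Hb) as [_ H]. apply H. intros r [z [[_ Hz] ->]].
  apply Rnot_lt_le. intros Hlt.
  destruct (Hz (rho - dist x z) ltac:(lra)) as [w [Hw Hwz]]. apply Hw. apply Hball.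
  pose proof (dist_triang w z x). rewrite (dist_sym z x) in H0. lra.
Qed.

Lemma dG_lip G z w : (exists b, boundary G b) -> dG G z <= dG G w + dist z w.
Proof.
  intros Hb. destruct (dG_glb G w Hb) as [_ H].
  assert (dG G z - dist z w <= dG G w); [|lra].
  apply H. intros r [b [Hb' ->]]. pose proof (dG_le G z b Hb'). pose proof (dist_triang z w b). lra.
Qed.

Lemma lip_cont (h : R -> R) x0 : (forall x, Rabs (h x - h x0) <= Rabs (x - x0)) -> continuity_pt h x0.
Proof.
  intros H. unfold continuity_pt, continue_in, limit1_in, limit_in. simpl. unfold R_dist.
  intros eps He. exists eps. split; auto. intros x [_ Hx]. eapply Rle_lt_trans; eauto.
Qed.

Definition seg (x y : pt) (th : R) : pt := (fst x + th * (fst y - fst x), snd x + th * (snd y - snd x)).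

Lemma seg_dist x y t1 t2 : dist (seg x y t1) (seg x y t2) = Rabs (t1 - t2) * dist y x.
Proof.
  unfold dist, seg. cbn [fst snd].
  replace ((fst x + t1 * (fst y - fst x) - (fst x + t2 * (fst y - fst x))) ^ 2 +
   (snd x + t1 * (snd y - snd x) - (snd x + t2 * (snd y - snd x))) ^ 2) with
   ((t1 - t2)^2 * ((fst y - fst x) ^ 2 + (snd y - snd x) ^ 2)) by ring.
  apply sqrt_scal. pose proof (pow2_ge_0 (fst y - fst x)); pose proof (pow2_ge_0 (snd y - snd x)); lra.
Qed.

Lemma seg_poly x y p n : (forall i, (i < n)%nat -> p i <= p (S i)) ->
  poly_length (seg x y) p n = (p n - p O) * dist y x.
Proof.
  induction n; intros H. unfold poly_length; simpl; ring.
  unfold poly_length in *. simpl. rewrite IHn by (intros; apply H; lia).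
  rewrite seg_dist. rewrite Rabs_right by (pose proof (H n ltac:(lia)); lra). ring.
Qed.

Lemma dist_pos_neq x y : x <> y -> 0 < dist y x.
Proof.
  intros Hxy. destruct (dist_pos y x) as [|H0]; auto. exfalso. apply Hxy.
  unfold dist in H0. symmetry in H0.
  destruct x as [x1 x2], y as [y1 y2]. cbn [fst snd] in H0.
  pose proof (pow2_ge_0 (y1 - x1)); pose proof (pow2_ge_0 (y2 - x2)).
  apply sqrt_eq_0 in H0; [|lra].
  f_equal; nra.
Qed.

Lemma seg_curve G x y : (exists b, boundary G b) -> x <> y ->
  (forall th, 0 <= th <= 1 -> G (seg x y th)) -> (forall z, G z -> 0 < dG G z) ->
  exists I, qh_length_of_curve G x y I.
Proof.
  intros Hb Hxy Hseg Hpos.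
  set (D := dist y x). assert (HD : 0 < D) by (apply dist_pos_neq; auto).
  assert (Hlen : forall th, 0 <= th -> is_length (seg x y) 0 th (th * D)).
  { intros th Hth. split; auto. split.
    - intros l [p [n [Hp ->]]]. destruct Hp as [H0 [Hn Hm]]. rewrite seg_poly by auto. rewrite H0, Hn. fold D. lra.
    - intros m Hm. apply Hm. exists (two 0 th), 1%nat. split. apply two_part; auto.
      rewrite seg_poly. unfold two; simpl. fold D. ring. intros i Hi. assert (i=0)%nat by lia. subst. unfold two; simpl. auto. }
  set (g0 := fun s => seg x y (s / D)).
  assert (Hin : forall s, 0 <= s <= D -> G (g0 s)).
  { intros s Hs. apply Hseg. split. apply Rdiv_le_0_compat; lra.
    apply Rmult_le_reg_r with D; auto. unfold Rdiv. rewrite Rmult_assoc, Rinv_l by lra. lra. }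
  assert (pr : Riemann_integrable (fun s => 1 / dG G (g0 s)) 0 D).
  { apply continuity_implies_RiemannInt. lra. intros s Hs.
    apply (continuity_pt_div (fun _ => 1) (fun s => dG G (g0 s))).
    apply continuity_pt_const. intros a b; auto.
    apply lip_cont. intros s'.
    assert (dist (g0 s') (g0 s) = Rabs (s' - s)).
    { unfold g0. rewrite seg_dist. fold D. replace (s'/D - s/D) with ((s' - s) / D) by (field; lra).
      unfold Rdiv. rewrite Rabs_mult, Rabs_inv, (Rabs_right D) by lra. field. lra. }
    pose proof (dG_lip G (g0 s') (g0 s) Hb). pose proof (dG_lip G (g0 s) (g0 s') Hb).
    rewrite dist_sym in H1. unfold Rabs at 1. destruct Rcase_abs; lra.
    pose proof (Hpos _ (Hin s Hs)). lra. }
  exists (RiemannInt pr). exists (seg x y), 0, 1. split. lra. split.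
  - intros t Ht eps He. exists (eps / D). split. apply Rdiv_lt_0_compat; lra.
    intros u Hu Hut. rewrite seg_dist. fold D. apply Rmult_lt_reg_r with (/ D). apply Rinv_0_lt_compat; lra.
    rewrite Rmult_assoc, Rinv_r by lra. lra.
  - split. intros; apply Hseg; auto. split.
    { unfold seg. destruct x; simpl. f_equal; ring. }
    split. { unfold seg. destruct x, y; simpl. f_equal; ring. }
    exists D. split. pose proof (Hlen 1 ltac:(lra)) as H1; rewrite Rmult_1_l in H1; exact H1.
    exists g0. split.
    + intros t s Ht Hts. unfold g0. f_equal.
      assert (s = t * D) by (apply (is_lub_u _ _ _ (proj2 Hts) (proj2 (Hlen t ltac:(lra))))).
      subst s. field. lra.
    + exists pr. auto.
Qed.

Definition mk (P u v : pt) (s t : R) : pt :=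
  (fst P + s * fst u + t * fst v, snd P + s * snd u + t * snd v).

Lemma mk_inj P u v s t s' t' : det u v <> 0 -> mk P u v s t = mk P u v s' t' -> s = s' /\ t = t'.
Proof.
  intros Hd H. unfold mk, det in *. injection H as H1 H2.
  assert (A1 : (s-s')*fst u + (t-t')*fst v = 0) by lra.
  assert (A2 : (s-s')*snd u + (t-t')*snd v = 0) by lra.
  assert (E1 : (s - s') * (fst u * snd v - snd u * fst v) = 0).
  { transitivity (snd v * ((s-s')*fst u + (t-t')*fst v) - fst v * ((s-s')*snd u + (t-t')*snd v)). ring. rewrite A1, A2; ring. }
  assert (E2 : (t - t') * (fst u * snd v - snd u * fst v) = 0).
  { transitivity (fst u * ((s-s')*snd u + (t-t')*snd v) - snd u * ((s-s')*fst u + (t-t')*fst v)). ring. rewrite A1, A2; ring. }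
  apply Rmult_integral in E1. apply Rmult_integral in E2. split.
  destruct E1; [lra|contradiction]. destruct E2; [lra|contradiction].
Qed.

Lemma rhombus_mk P u v s t : det u v <> 0 -> rhombus P u v (mk P u v s t) -> 0 < s < 1 /\ 0 < t < 1.
Proof.
  intros Hd [s' [t' [Hs [Ht E]]]]. fold (mk P u v s' t') in E. apply mk_inj in E; auto.
  destruct E; subst; auto.
Qed.

Lemma mk_rhombus P u v s t : 0 < s < 1 -> 0 < t < 1 -> rhombus P u v (mk P u v s t).
Proof. intros. exists s, t. auto. Qed.

Lemma dist_mk P u v s t s' t' N c :
  fst u ^ 2 + snd u ^ 2 = N -> fst v ^ 2 + snd v ^ 2 = N -> fst u * fst v + snd u * snd v = c * N ->
  dist (mk P u v s t) (mk P u v s' t') = sqrt (N * ((s - s')^2 + (t - t')^2 + 2 * (s - s') * (t - t') * c)).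
Proof.
  intros Hu Hv Hd. unfold dist, mk. cbn [fst snd]. f_equal.
  transitivity ((s-s')^2 * (fst u ^ 2 + snd u ^ 2) + (t-t')^2 * (fst v ^ 2 + snd v ^ 2)
     + 2 * (s-s') * (t-t') * (fst u * fst v + snd u * snd v)). ring.
  rewrite Hu, Hv, Hd. ring.
Qed.

Lemma mk00 P u v : mk P u v 0 0 = P.
Proof. unfold mk. destruct P. simpl. f_equal; ring. Qed.

Lemma dist_mk_s P u v s t s' : dist (mk P u v s t) (mk P u v s' t) = Rabs (s - s') * sqrt (fst u ^ 2 + snd u ^ 2).
Proof.
  unfold dist, mk. cbn [fst snd].
  replace ((fst P + s * fst u + t * fst v - (fst P + s' * fst u + t * fst v)) ^ 2 +
    (snd P + s * snd u + t * snd v - (snd P + s' * snd u + t * snd v)) ^ 2) with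
    ((s - s')^2 * (fst u ^ 2 + snd u ^ 2)) by ring.
  apply sqrt_scal. pose proof (pow2_ge_0 (fst u)); pose proof (pow2_ge_0 (snd u)); lra.
Qed.

Lemma dist_mk_t P u v s t t' : dist (mk P u v s t) (mk P u v s t') = Rabs (t - t') * sqrt (fst v ^ 2 + snd v ^ 2).
Proof.
  unfold dist, mk. cbn [fst snd].
  replace ((fst P + s * fst u + t * fst v - (fst P + s * fst u + t' * fst v)) ^ 2 +
    (snd P + s * snd u + t * snd v - (snd P + s * snd u + t' * snd v)) ^ 2) with
    ((t - t')^2 * (fst v ^ 2 + snd v ^ 2)) by ring.
  apply sqrt_scal. pose proof (pow2_ge_0 (fst v)); pose proof (pow2_ge_0 (snd v)); lra.
Qed.

Lemma boundary_mk P u v s t : det u v <> 0 -> 0 <= s <= 1 -> 0 <= t <= 1 ->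
  (s = 0 \/ s = 1 \/ t = 0 \/ t = 1) -> boundary (rhombus P u v) (mk P u v s t).
Proof.
  intros Hd Hs Ht Hside. split.
  - intros eps He.
    set (M := sqrt (((1/2 - s) * fst u + (1/2 - t) * fst v)^2 + ((1/2 - s) * snd u + (1/2 - t) * snd v)^2)).
    assert (HM : 0 <= M) by apply sqrt_pos.
    set (d := Rmin (1/2) (eps / (M + 1))).
    assert (Hd1 : d <= 1/2) by apply Rmin_l.
    assert (Hd2 : d <= eps / (M+1)) by apply Rmin_r.
    assert (Hd0 : 0 < d) by (apply Rmin_pos; [lra| apply Rdiv_lt_0_compat; lra]).
    exists (mk P u v (s + d * (1/2 - s)) (t + d * (1/2 - t))). split.
    + apply mk_rhombus; nra.
    + unfold dist, mk. cbn [fst snd].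
      replace ((fst P + (s + d * (1 / 2 - s)) * fst u + (t + d * (1 / 2 - t)) * fst v - (fst P + s * fst u + t * fst v)) ^ 2 +
        (snd P + (s + d * (1 / 2 - s)) * snd u + (t + d * (1 / 2 - t)) * snd v - (snd P + s * snd u + t * snd v)) ^ 2)
      with (d^2 * (((1/2 - s) * fst u + (1/2 - t) * fst v)^2 + ((1/2 - s) * snd u + (1/2 - t) * snd v)^2)) by ring.
      rewrite sqrt_scal by (pose proof (pow2_ge_0 ((1/2 - s) * fst u + (1/2 - t) * fst v)); pose proof (pow2_ge_0 ((1/2 - s) * snd u + (1/2 - t) * snd v)); lra).
      fold M. rewrite Rabs_right by lra.
      assert (d * (M+1) <= eps). { apply Rmult_le_reg_r with (/ (M+1)). apply Rinv_0_lt_compat; lra.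
        rewrite Rmult_assoc, Rinv_r by lra. lra. }
      nra.
  - intros eps He.
    set (Mu := sqrt (fst u ^ 2 + snd u ^ 2)). set (Mv := sqrt (fst v ^ 2 + snd v ^ 2)).
    assert (0 <= Mu) by apply sqrt_pos. assert (0 <= Mv) by apply sqrt_pos.
    set (d := eps / (2 * (Mu + Mv + 1))).
    assert (Hd0 : 0 < d) by (apply Rdiv_lt_0_compat; lra).
    assert (Hdm : d * (Mu + Mv + 1) < eps).
    { unfold d. replace (eps / (2 * (Mu + Mv + 1)) * (Mu + Mv + 1)) with (eps / 2) by (field; lra). lra. }
    destruct Hside as [E|[E|[E|E]]].
    + exists (mk P u v (s - d) t). split.
      * intros Hr. apply rhombus_mk in Hr; auto. lra.
      * rewrite dist_mk_s. fold Mu. replace (s - d - s) with (- d) by ring. rewrite Rabs_Ropp, Rabs_right by lra. nra.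
    + exists (mk P u v (s + d) t). split.
      * intros Hr. apply rhombus_mk in Hr; auto. lra.
      * rewrite dist_mk_s. fold Mu. replace (s + d - s) with d by ring. rewrite Rabs_right by lra. nra.
    + exists (mk P u v s (t - d)). split.
      * intros Hr. apply rhombus_mk in Hr; auto. lra.
      * rewrite dist_mk_t. fold Mv. replace (t - d - t) with (- d) by ring. rewrite Rabs_Ropp, Rabs_right by lra. nra.
    + exists (mk P u v s (t + d)). split.
      * intros Hr. apply rhombus_mk in Hr; auto. lra.
      * rewrite dist_mk_t. fold Mv. replace (t + d - t) with d by ring. rewrite Rabs_right by lra. nra.
Qed.

Lemma cs_bound p1 p2 q1 q2 : Rabs (p1 * q2 - p2 * q1) <= sqrt (p1^2 + p2^2) * sqrt (q1^2 + q2^2).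
Proof.
  rewrite <- sqrt_mult by (pose proof (pow2_ge_0 p1); pose proof (pow2_ge_0 p2); pose proof (pow2_ge_0 q1); pose proof (pow2_ge_0 q2); lra).
  rewrite <- sqrt_Rsqr_abs. apply sqrt_le_1_alt. unfold Rsqr.
  pose proof (pow2_ge_0 (p1*q1 + p2*q2)). nra.
Qed.

Lemma ball_in P u v a s t m : det u v <> 0 -> sqrt (fst u ^ 2 + snd u ^ 2) = a -> sqrt (fst v ^ 2 + snd v ^ 2) = a ->
  0 < m -> m <= s <= 1 - m -> m <= t <= 1 - m ->
  forall w, dist w (mk P u v s t) < m * Rabs (det u v) / a -> rhombus P u v w.
Proof.
  intros Hd Hu Hv Hm Hs Ht w Hw.
  assert (Ha : 0 < a).
  { destruct (sqrt_pos (fst u ^ 2 + snd u ^ 2)) as [H|H]. lra. exfalso. apply Hd. rewrite <- H in Hu.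
    subst a. symmetry in H. apply sqrt_eq_0 in H; [|pose proof (pow2_ge_0 (fst u)); pose proof (pow2_ge_0 (snd u)); lra].
    unfold det. assert (fst u = 0) by nra. assert (snd u = 0) by nra. rewrite H0, H1. ring. }
  assert (Hdp : 0 < Rabs (det u v)) by (apply Rabs_pos_lt; auto).
  set (z := mk P u v s t). set (D1 := fst w - fst z). set (D2 := snd w - snd z).
  set (s' := s + (D1 * snd v - D2 * fst v) / det u v).
  set (t' := t + (fst u * D2 - snd u * D1) / det u v).
  assert (Hw' : w = mk P u v s' t').
  { destruct w as [w1 w2]. unfold mk, s', t', D1, D2, z, mk, det in *. cbn [fst snd] in *. f_equal; field; auto. }
  assert (Hdist : dist w z = sqrt (D1^2 + D2^2)) by (unfold dist; auto).
  assert (B1 : Rabs (D1 * snd v - D2 * fst v) <= dist w z * a).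
  { rewrite Hdist, <- Hv. apply cs_bound. }
  assert (B2 : Rabs (fst u * D2 - snd u * D1) <= dist w z * a).
  { rewrite Hdist, <- Hu. replace (fst u * D2 - snd u * D1) with (-(D1 * snd u - D2 * fst u)) by ring.
    rewrite Rabs_Ropp. apply cs_bound. }
  fold z in Hw.
  assert (Hwa : dist w z * a < m * Rabs (det u v)).
  { apply Rmult_lt_reg_r with (/ a). apply Rinv_0_lt_compat; auto.
    rewrite Rmult_assoc, Rinv_r by lra. rewrite Rmult_1_r. auto. }
  assert (K : forall X, Rabs X <= dist w z * a -> Rabs (X / det u v) < m).
  { intros X HX. unfold Rdiv. rewrite Rabs_mult, Rabs_inv.
    apply Rmult_lt_reg_r with (Rabs (det u v)); auto. rewrite Rmult_assoc, Rinv_l by lra. lra. }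
  pose proof (K _ B1) as K1. pose proof (K _ B2) as K2.
  rewrite Hw'. apply mk_rhombus; unfold s', t';
    [revert K1 | revert K2]; unfold Rabs; destruct Rcase_abs; intros; lra.
Qed.

Lemma core_ineq mu s t c : 0 <= mu <= s -> s <= t -> 0 <= c < 1 ->
  mu^2 + (- (mu * c))^2 + 2 * mu * (- (mu * c)) * c <= (1 - c) / 2 * (s^2 + t^2 + 2 * s * t * c).
Proof.
  intros Hm Hst Hc.
  assert (E : mu^2 + (- (mu * c))^2 + 2 * mu * (- (mu * c)) * c = mu^2 * (1 - c^2)) by ring.
  rewrite E.
  assert (mu^2 <= s^2) by nra.
  assert (s^2 * (1 - c^2) <= (1 - c) / 2 * (s^2 + t^2 + 2 * s * t * c)).
  { assert (EE : (1 - c) / 2 * (s^2 + t^2 + 2 * s * t * c) - s^2 * (1 - c^2) = /2 * ((1 - c) * ((t^2 - s^2) + 2 * c * s * (t - s)))) by field.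
    assert (0 <= (1 - c) * ((t^2 - s^2) + 2 * c * s * (t - s))) by (apply Rmult_le_pos; [lra| assert (0 <= s) by lra; assert (0 <= (t - s) * (t + s)) by (apply Rmult_le_pos; lra); assert (0 <= c * s * (t - s)) by (apply Rmult_le_pos; [apply Rmult_le_pos|]; lra); nra]). lra. }
  assert (0 <= 1 - c^2) by nra. assert (0 <= (s^2 - mu^2)*(1-c^2)) by (apply Rmult_le_pos; lra). lra.
Qed.

Lemma near_bd P u v N c S s t : det u v <> 0 ->
  fst u ^ 2 + snd u ^ 2 = N -> fst v ^ 2 + snd v ^ 2 = N -> fst u * fst v + snd u * snd v = c * N ->
  0 < N -> 0 <= c < 1 -> 0 < S -> S^2 = (1 - c)/2 ->
  0 < s < 1 -> 0 < t < 1 -> s <= t ->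
  exists b, boundary (rhombus P u v) b /\ dist (mk P u v s t) b <= S * dist (mk P u v s t) P.
Proof.
  intros Hd Hu Hv Hdot HN Hc HS HS2 Hs Ht Hst.
  assert (Hmu : exists mu, 0 <= mu <= s /\ 0 <= s - mu <= 1 /\ 0 <= t + mu * c <= 1 /\ (s - mu = 0 \/ t + mu * c = 1)).
  { destruct (Rle_dec (t + s * c) 1).
    - exists s. split. lra. split. lra. split. nra. left; ring.
    - assert (Hc0 : 0 < c) by nra. exists ((1 - t) / c).
      assert (E : (1 - t) / c * c = 1 - t) by (field; lra).
      assert (0 <= (1 - t)/c) by (apply Rdiv_le_0_compat; lra).
      assert ((1 - t)/c <= s). { apply Rmult_le_reg_r with c; auto. rewrite E. lra. }
      split. lra. split. lra. split. lra. right. lra. }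
  destruct Hmu as [mu [H1 [H2 [H3 H4]]]].
  exists (mk P u v (s - mu) (t + mu * c)). split.
  - apply boundary_mk; auto. destruct H4; auto.
  - replace (dist (mk P u v s t) P) with (dist (mk P u v s t) (mk P u v 0 0)) by (rewrite mk00; auto). rewrite (dist_mk P u v s t (s - mu) (t + mu * c) N c) by auto.
    rewrite (dist_mk P u v s t 0 0 N c) by auto.
    rewrite <- (sqrt_pow2 S) by lra. rewrite <- sqrt_mult; [| nra | apply Rmult_le_pos; [lra | assert (0 <= s*t*c) by (apply Rmult_le_pos; [apply Rmult_le_pos|]; lra); nra]].
    apply sqrt_le_1_alt. rewrite HS2.
    replace (s - (s - mu)) with mu by ring. replace (t - (t + mu * c)) with (- (mu * c)) by ring.
    replace (s - 0) with s by ring. replace (t - 0) with t by ring.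
    pose proof (core_ineq mu s t c H1 Hst Hc). nra.
Qed.

Definition neg (w : pt) : pt := (- fst w, - snd w).

Lemma set_ext (A B : pt -> Prop) : (forall z, A z <-> B z) -> A = B.
Proof. intros H. apply functional_extensionality. intros z. apply propositional_extensionality. auto. Qed.

Lemma mk_swap P u v s t : mk P u v s t = mk P v u t s.
Proof. unfold mk. f_equal; ring. Qed.

Lemma rhombus_swap P u v : rhombus P u v = rhombus P v u.
Proof.
  apply set_ext. intros z; split; intros [s [t [Hs [Ht E]]]]; exists t, s; split; auto; split; auto;
  subst z; unfold mk; simpl; f_equal; ring.
Qed.

Lemma mk_flip P u v s t : mk (mk P u v 1 1) (neg u) (neg v) s t = mk P u v (1 - s) (1 - t).
Proof. unfold mk, neg. simpl. f_equal; ring. Qed.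

Lemma rhombus_flip P u v : rhombus P u v = rhombus (mk P u v 1 1) (neg u) (neg v).
Proof.
  apply set_ext. intros z; split; intros [s [t [Hs [Ht E]]]]; exists (1 - s), (1 - t); (split; [lra|split; [lra|]]);
  subst z; unfold mk, neg; simpl; f_equal; ring.
Qed.

Lemma mk_shift P u v s t : mk (mk P u v 1 0) (neg u) v s t = mk P u v (1 - s) t.
Proof. unfold mk, neg. simpl. f_equal; ring. Qed.

Lemma rhombus_shift P u v : rhombus P u v = rhombus (mk P u v 1 0) (neg u) v.
Proof.
  apply set_ext. intros z; split; intros [s [t [Hs [Ht E]]]]; exists (1 - s), t; (split; [lra|split; [lra|]]);
  subst z; unfold mk, neg; simpl; f_equal; ring.
Qed.

Lemma rh_bnonempty P u v : det u v <> 0 -> exists b, boundary (rhombus P u v) b.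
Proof. intros. exists (mk P u v 0 0). apply boundary_mk; auto; lra. Qed.

Lemma dG_le_vertex P u v N c S : det u v <> 0 ->
  fst u ^ 2 + snd u ^ 2 = N -> fst v ^ 2 + snd v ^ 2 = N -> fst u * fst v + snd u * snd v = c * N ->
  0 < N -> 0 <= c < 1 -> 0 < S -> S^2 = (1 - c)/2 ->
  forall z, rhombus P u v z -> dG (rhombus P u v) z <= S * dist z P.
Proof.
  intros Hd Hu Hv Hdot HN Hc HS HS2 z [s [t [Hs [Ht E]]]]. fold (mk P u v s t) in E. subst z.
  destruct (Rle_dec s t).
  - destruct (near_bd P u v N c S s t) as [b [Hb Hdb]]; auto.
    pose proof (dG_le _ (mk P u v s t) b Hb). lra.
  - destruct (near_bd P v u N c S t s) as [b [Hb Hdb]]; auto.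
    + unfold det in *. intro. apply Hd. lra.
    + lra.
    + lra.
    + rewrite <- mk_swap in Hdb. rewrite <- rhombus_swap in Hb.
      pose proof (dG_le _ (mk P u v s t) b Hb). lra.
Qed.

Lemma dG_pos P u v a z : det u v <> 0 -> sqrt (fst u ^ 2 + snd u ^ 2) = a -> sqrt (fst v ^ 2 + snd v ^ 2) = a ->
  0 < a -> rhombus P u v z -> 0 < dG (rhombus P u v) z.
Proof.
  intros Hd Hu Hv Ha [s [t [Hs [Ht E]]]]. fold (mk P u v s t) in E. subst z.
  set (m := Rmin (Rmin s (1 - s)) (Rmin t (1 - t))).
  assert (Hm : 0 < m) by (unfold m; repeat apply Rmin_pos; lra).
  assert (m <= s /\ m <= 1 - s /\ m <= t /\ m <= 1 - t).
  { unfold m. pose proof (Rmin_l (Rmin s (1 - s)) (Rmin t (1 - t))). pose proof (Rmin_r (Rmin s (1 - s)) (Rmin t (1 - t))).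
    pose proof (Rmin_l s (1-s)). pose proof (Rmin_r s (1-s)). pose proof (Rmin_l t (1-t)). pose proof (Rmin_r t (1-t)). lra. }
  assert (Hdp : 0 < Rabs (det u v)) by (apply Rabs_pos_lt; auto).
  apply Rlt_le_trans with (m * Rabs (det u v) / a).
  apply Rdiv_lt_0_compat; auto. apply Rmult_lt_0_compat; auto.
  apply dG_ge. apply rh_bnonempty; auto.
  intros w Hw. apply (ball_in P u v a s t m); auto; lra.
Qed.

Lemma kG_ge G x y K0 : (exists I, qh_length_of_curve G x y I) ->
  (forall I, qh_length_of_curve G x y I -> K0 <= I) -> K0 <= kG G x y.
Proof.
  intros Hne Hlb. destruct (glb_exists (qh_length_of_curve G x y) Hne (ex_intro _ K0 Hlb)) as [_ H].
  apply H. auto.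
Qed.

Lemma main_case P u v A N c S : det u v <> 0 ->
  fst u ^ 2 + snd u ^ 2 = N -> fst v ^ 2 + snd v ^ 2 = N -> fst u * fst v + snd u * snd v = c * N ->
  0 < N -> 0 <= c < 1 -> 0 < S -> S^2 = (1 - c)/2 ->
  uniformity_bound (rhombus P u v) A -> 2 / S <= A.
Proof.
  intros Hd Hu Hv Hdot HN Hc HS HS2 [HA1 HA].
  set (G := rhombus P u v).
  set (a := sqrt N). assert (Ha : 0 < a) by (apply sqrt_lt_R0; auto).
  assert (Hua : sqrt (fst u ^ 2 + snd u ^ 2) = a) by (rewrite Hu; auto).
  assert (Hva : sqrt (fst v ^ 2 + snd v ^ 2) = a) by (rewrite Hv; auto).
  set (Q := mk P u v 1 1).
  set (W := sqrt (N * (2 + 2 * c))). assert (HW : 0 < W) by (apply sqrt_lt_R0; nra).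
  assert (Hdp : 0 < Rabs (det u v)) by (apply Rabs_pos_lt; auto).
  set (K := Rabs (det u v) / a). assert (HK : 0 < K) by (apply Rdiv_lt_0_compat; auto).
  assert (Hbd : exists b, boundary G b) by (apply rh_bnonempty; auto).
  assert (Hdd : forall z, G z -> 0 < dG G z /\ dG G z <= S * dist z P /\ dG G z <= S * dist z Q).
  { intros z Hz. split; [|split].
    - apply (dG_pos P u v a); auto.
    - apply (dG_le_vertex P u v N c S); auto.
    - unfold G. rewrite rhombus_flip. fold Q. unfold G in Hz. rewrite rhombus_flip in Hz. fold Q in Hz.
      apply (dG_le_vertex Q (neg u) (neg v) N c S); auto.
      + unfold det, neg in *. simpl. intro; apply Hd; lra.
      + unfold neg; simpl. rewrite <- Hu. ring.
      + unfold neg; simpl. rewrite <- Hv. ring.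
      + unfold neg; simpl. rewrite <- Hdot. ring. }
  apply Rnot_lt_le. intros HAS.
  set (B := ln (1 + W / K)).
  assert (HB : 0 < B). { unfold B. rewrite <- ln_1. apply ln_increasing. lra. assert (0 < W/K) by (apply Rdiv_lt_0_compat; auto). lra. }
  pose proof ln_lt_2 as Hl2.
  set (lam := Rmax (ln 2) ((A * B + 2 / S * ln 2) / (2 / S - A)) + 1).
  assert (Hlam1 : ln 2 < lam) by (unfold lam; pose proof (Rmax_l (ln 2) ((A * B + 2 / S * ln 2) / (2 / S - A))); lra).
  assert (Hlam2 : (A * B + 2 / S * ln 2) / (2 / S - A) < lam) by (unfold lam; pose proof (Rmax_r (ln 2) ((A * B + 2 / S * ln 2) / (2 / S - A))); lra).
  set (tau := exp (- lam)).
  assert (Htau0 : 0 < tau) by apply exp_pos.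
  assert (Htau1 : tau < 1/2).
  { unfold tau. replace (1/2) with (exp (- ln 2)). apply exp_increasing. lra.
    rewrite exp_Ropp, exp_ln by lra. field. }
  assert (Hlntau : ln tau = - lam) by (unfold tau; apply ln_exp).
  set (x := mk P u v tau tau). set (y := mk P u v (1 - tau) (1 - tau)).
  assert (Gx : G x) by (apply mk_rhombus; lra).
  assert (Gy : G y) by (apply mk_rhombus; lra).
  assert (Hsc : forall k, sqrt (N * (k^2 + k^2 + 2 * k * k * c)) = Rabs k * W).
  { intros k. unfold W. rewrite <- sqrt_scal by nra. f_equal. ring. }
  assert (HxP : dist x P = tau * W).
  { replace (dist x P) with (dist x (mk P u v 0 0)) by (rewrite mk00; auto). unfold x.
    rewrite (dist_mk P u v _ _ _ _ N c) by auto. replace (tau - 0) with tau by ring. rewrite Hsc. rewrite Rabs_right; lra. }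
  assert (HyQ : dist y Q = tau * W).
  { unfold y, Q. rewrite (dist_mk P u v _ _ _ _ N c) by auto. replace (1 - tau - 1) with (- tau) by ring.
    rewrite Hsc. rewrite Rabs_Ropp, Rabs_right; lra. }
  assert (Hxy : dist x y = (1 - 2 * tau) * W).
  { unfold x, y. rewrite (dist_mk P u v _ _ _ _ N c) by auto. replace (tau - (1 - tau)) with (2 * tau - 1) by ring.
    rewrite Hsc. rewrite Rabs_left; lra. }
  assert (Hk : 2 / S * (lam - ln 2) <= kG G x y).
  { apply kG_ge.
    - apply seg_curve; auto.
      + intros E. apply mk_inj in E; auto. lra.
      + intros th Hth. replace (seg x y th) with (mk P u v (tau + th * (1 - 2 * tau)) (tau + th * (1 - 2 * tau))).
        apply mk_rhombus; nra. unfold seg, x, y, mk. simpl. f_equal; ring.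
      + intros z Hz. apply Hdd; auto.
    - intros I HI. destruct (curve_facts G x y I HI) as [L [g0 [pr [HI' [HL0 [HLxy Hg]]]]]].
      rewrite <- HI'.
      eapply Rle_trans; [| apply (int_lower G x y P Q S (tau * W) L g0 pr); auto].
      2: { apply Rmult_lt_0_compat; auto. }
      apply Rmult_le_compat_l. apply Rlt_le, Rdiv_lt_0_compat; lra.
      replace (lam - ln 2) with (ln ((tau * W + ((1 - 2 * tau) * W)/2) / (tau * W))).
      + apply ln_le. apply Rdiv_lt_0_compat. nra. nra.
        unfold Rdiv. apply Rmult_le_compat_r. apply Rlt_le, Rinv_0_lt_compat; nra. lra.
      + replace ((tau * W + (1 - 2 * tau) * W / 2) / (tau * W)) with (/ (2 * tau)) by (field; split; lra).
        rewrite ln_Rinv by lra. rewrite ln_mult by lra. lra. }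
  assert (Hdx : tau * K <= dG G x).
  { apply dG_ge; auto. intros w Hw. apply (ball_in P u v a tau tau tau); auto; try lra.
    unfold K in Hw. replace (tau * Rabs (det u v) / a) with (tau * (Rabs (det u v) / a)) by (field; lra). auto. }
  assert (Hdy : tau * K <= dG G y).
  { apply dG_ge; auto. intros w Hw. apply (ball_in P u v a (1 - tau) (1 - tau) tau); auto; try lra.
    unfold K in Hw. replace (tau * Rabs (det u v) / a) with (tau * (Rabs (det u v) / a)) by (field; lra). auto. }
  assert (Hmin : tau * K <= Rmin (dG G x) (dG G y)) by (apply Rmin_glb; auto).
  assert (HtK : 0 < tau * K) by nra.
  assert (Hj : jG G x y <= lam + B).
  { unfold jG. rewrite Hxy.
    assert (H1 : (1 - 2 * tau) * W / Rmin (dG G x) (dG G y) <= W / (tau * K)).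
    { unfold Rdiv. apply Rmult_le_compat. nra. apply Rlt_le, Rinv_0_lt_compat; lra. nra.
      apply Rinv_le_contravar; auto. }
    assert (H0 : 0 <= (1 - 2 * tau) * W / Rmin (dG G x) (dG G y)).
    { apply Rdiv_le_0_compat; nra. }
    assert (H2 : 1 + W / (tau * K) <= (1 + W / K) / tau).
    { replace ((1 + W / K) / tau) with (1 / tau + W / (tau * K)) by (field; split; lra).
      assert (1 <= 1 / tau). { unfold Rdiv. rewrite Rmult_1_l. rewrite <- Rinv_1. apply Rinv_le_contravar; lra. }
      lra. }
    apply Rle_trans with (ln ((1 + W / K) / tau)).
    - apply ln_le. lra. lra.
    - rewrite ln_div by (try lra; assert (0 < W/K) by (apply Rdiv_lt_0_compat; auto); lra).
      fold B. lra. }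
  specialize (HA x y Gx Gy).
  assert (A * jG G x y <= A * (lam + B)) by (apply Rmult_le_compat_l; lra).
  assert (Hpos : 0 < 2 / S - A) by lra.
  assert (A * B + 2 / S * ln 2 < (2 / S - A) * lam).
  { apply Rmult_lt_reg_r with (/ (2 / S - A)). apply Rinv_0_lt_compat; auto.
    rewrite (Rmult_comm (2 / S - A) lam), Rmult_assoc, Rinv_r, Rmult_1_r by lra. auto. }
  assert (E1: 2/S*(lam - ln 2) = 2/S*lam - 2/S*ln 2) by ring. assert (E2: A*(lam+B) = A*lam + A*B) by ring. assert (E3: (2/S - A)*lam = 2/S*lam - A*lam) by ring. change (kG G x y <= A * jG G x y) in HA. lra.
Qed.

Theorem theorem5p4 (P u v : pt) (alpha : R) :
  norm2 u = norm2 v -> 0 < norm2 u -> det u v <> 0 ->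
  0 < alpha <= PI / 2 ->
  cos alpha = Rabs (dot u v) / (norm2 u * norm2 v) ->
  forall A : R, uniformity_bound (rhombus P u v) A ->
  2 / sin (alpha / 2) <= A.
Proof.
  intros Hn Hpos Hd Hal Hcos A HA.
  set (N := fst u ^ 2 + snd u ^ 2).
  assert (HN0 : 0 <= N) by (unfold N; pose proof (pow2_ge_0 (fst u)); pose proof (pow2_ge_0 (snd u)); lra).
  assert (HNv0 : 0 <= fst v ^ 2 + snd v ^ 2) by (pose proof (pow2_ge_0 (fst v)); pose proof (pow2_ge_0 (snd v)); lra).
  assert (HNv : fst v ^ 2 + snd v ^ 2 = N).
  { symmetry. apply sqrt_inj; auto. }
  assert (HN : 0 < N).
  { destruct HN0 as [|E]; auto. unfold norm2 in Hpos. fold N in Hpos. rewrite <- E, sqrt_0 in Hpos. lra. }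
  assert (Hnn : norm2 u * norm2 v = N).
  { unfold norm2 in *. rewrite <- Hn. fold N. apply sqrt_sqrt. lra. }
  rewrite Hnn in Hcos.
  set (S := sin (alpha / 2)).
  pose proof PI_RGT_0 as HPI.
  assert (HS : 0 < S) by (apply sin_gt_0; lra).
  assert (Hc2 : cos alpha = 1 - 2 * S * S).
  { unfold S. rewrite <- cos_2a_sin. f_equal. field. }
  assert (Hlag : det u v ^ 2 + dot u v ^ 2 = N * N).
  { unfold det, dot. rewrite <- HNv at 2. unfold N. ring. }
  assert (Hdet2 : 0 < det u v ^ 2) by (assert (det u v * det u v > 0) by (apply Rsqr_pos_lt; auto); nra).
  destruct (Rle_dec 0 (dot u v)) as [Hdp|Hdn].
  - rewrite Rabs_right in Hcos by lra.
    apply (main_case P u v A N (dot u v / N) S); auto.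
    + unfold dot. field. lra.
    + split. apply Rdiv_le_0_compat; lra.
      assert (dot u v < N) by nra.
      apply Rmult_lt_reg_r with N; auto. unfold Rdiv. rewrite Rmult_assoc, Rinv_l by lra. lra.
    + rewrite <- Hcos, Hc2. field.
  - rewrite Rabs_left in Hcos by lra.
    rewrite rhombus_shift in HA.
    apply (main_case (mk P u v 1 0) (neg u) v A N (- dot u v / N) S); auto.
    + unfold det, neg in *. simpl. intro. apply Hd. lra.
    + unfold neg. simpl. unfold N. ring.
    + unfold neg, dot. simpl. field. lra.
    + split. apply Rdiv_le_0_compat; lra.
      assert (- dot u v < N) by nra.
      apply Rmult_lt_reg_r with N; auto. unfold Rdiv. rewrite Rmult_assoc, Rinv_l by lra. lra.
    + rewrite <- Hcos, Hc2. field.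
Qed.
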